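(* Let $n\ge k\ge 3$ and let $U_1$ be the unicyclic graph on $k$ vertices consisting of a triangle $v_1v_2v_3$ together with $k-3$ further vertices each adjacent only to $v_1$. Regard $U_1$ as a subgraph of $K_n$ and let $\Gamma=(K_n,U_1^-)$. Then, with $u=n-k$, $$\varphi(\Gamma,\lambda)=(\lambda+1)^{n-5}(\lambda-1)\Big(\lambda^4+(6-n)\lambda^3+(16-5n)\lambda^2+(4k-11n+4ku+18)\lambda+28k-31n+12ku+7\Big).$$
   Context: For a subgraph $H$ of $K_n$, $(K_n,H^-)$ denotes the signed complete graph on $n$ vertices whose negative edges are exactly the edges of $H$ (all other edges positive); its adjacency matrix has entry $-1$ for negative edges, $+1$ for positive edges and $0$ on the diagonal. $\varphi(\Gamma,\lambda)=\det(\lambda I-A(\Gamma))$. *)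

(* Defs.v *)
From HB Require Import structures.
From mathcomp Require Import all_boot all_order all_algebra.
Set Implicit Arguments. Unset Strict Implicit. Unset Printing Implicit Defensive.
Import Order.TTheory GRing.Theory Num.Theory.
Local Open Scope ring_scope.

(* Adjacency relation of the unicyclic graph U_1 on vertex set 'I_k:
   vertices 0,1,2 form the triangle v1 v2 v3 (v1 = 0), and every other
   vertex j >= 3 is adjacent only to vertex 0.  So a ~ b iff a <> b and
   (a = 0 or b = 0 or {a,b} = {1,2}). *)
Definition U1_edge (k : nat) (a b : 'I_k) : bool :=
  (a != b) &&
  [|| (nat_of_ord a == 0)%N, (nat_of_ord b == 0)%N,
      (nat_of_ord a == 1)%N && (nat_of_ord b == 2)%N
    | (nat_of_ord a == 2)%N && (nat_of_ord b == 1)%N].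

Definition neg_edge (n k : nat) (f : 'I_k -> 'I_n) (i j : 'I_n) : bool :=
  [exists a : 'I_k, exists b : 'I_k, [&& f a == i, f b == j & U1_edge a b]].

Definition signed_complete_adj (n : nat) (neg : 'I_n -> 'I_n -> bool) : 'M[int]_n :=
  \matrix_(i, j) (if i == j then 0 else if neg i j then -1 else 1).

(* Main.v *)
Require Import Defs.
From HB Require Import structures.
From mathcomp Require Import all_boot all_order all_algebra.
From mathcomp Require Import ring.
Set Implicit Arguments. Unset Strict Implicit. Unset Printing Implicit Defensive.
Import Order.TTheory GRing.Theory Num.Theory.
Local Open Scope ring_scope.

Lemma sylv (R : comRingType) n m (y : R) (U : 'M[R]_(n, m)) (W : 'M[R]_(m, n)) :
  y ^+ m * \det (y%:M + U *m W) = y ^+ n * \det (y%:M + W *m U).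
Proof.
pose X := block_mx (y%:M : 'M_n) U (- W) (1%:M : 'M_m).
have E1 : block_mx (1%:M : 'M_n) (- U) 0 (1%:M : 'M_m) *m X =
          block_mx (y%:M + U *m W) 0 (- W) 1%:M.
  rewrite mulmx_block !mul1mx !mul0mx !add0r mulmxN mulNmx opprK mulmx1 addrN.
  by rewrite addrC.
have E2 : block_mx (1%:M : 'M_n) 0 W (y%:M : 'M_m) *m X =
          block_mx (y%:M) U 0 (y%:M + W *m U).
  rewrite mulmx_block !mul1mx !mul0mx !addr0 mulmxN mul_scalar_mx mul_mx_scalar. idtac.
  by rewrite subrr mulmx1 addrC.
have D1 := congr1 determinant E1.
have D2 := congr1 determinant E2.
rewrite det_mulmx det_ublock !det1 mul1r mul1r det_lblock det1 mulr1 in D1.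
rewrite det_mulmx det_lblock det1 mul1r det_scalar det_ublock det_scalar in D2.
by rewrite -D1 D2.
Qed.

Definition detf (R : comRingType) n (g : nat -> nat -> R) : R :=
  \det (\matrix_(i < n, j < n) g i j).

Lemma detfS (R : comRingType) n (g : nat -> nat -> R) :
  detf n.+1 g = \sum_(j < n.+1) g 0%N j * ((-1) ^+ j *
      detf n (fun a b => g a.+1 (bump j b))).
Proof.
rewrite /detf (expand_det_row _ 0); apply: eq_bigr => j _.
rewrite /cofactor add0n !mxE; congr (_ * (_ * _)).
by congr (\det _); apply/matrixP => a b; rewrite !mxE.
Qed.

Fixpoint dl (R : comRingType) n (g : nat -> nat -> R) : R :=
  match n with
  | 0 => 1
  | m.+1 => foldr (fun j acc => g 0%N j * ((-1) ^+ j *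
               dl m (fun a b => g a.+1 (bump j b))) + acc) 0 (iota 0 m.+1)
  end.

Lemma detf_dl (R : comRingType) n (g : nat -> nat -> R) : detf n g = dl n g.
Proof.
elim: n g => [|n IH] g; first exact: det_mx00.
rewrite detfS -(big_mkord xpredT (fun j => g 0%N j * ((-1) ^+ j *
      detf n (fun a b => g a.+1 (bump j b))))).
have -> : dl n.+1 g = foldr (fun j acc => g 0%N j * ((-1) ^+ j *
               dl n (fun a b => g a.+1 (bump j b))) + acc) 0 (index_iota 0 n.+1) by [].
elim: (index_iota 0 n.+1) => [|x s IHs]; first by rewrite big_nil.
by rewrite big_cons IHs IH.
Qed.


Section Main.
Variables (n k : nat) (hk : (3 <= k)%N) (f : 'I_k -> 'I_n) (hf : injective f).

Let a0 : 'I_k := Ordinal (leq_trans (isT : (1 <= 3)%N) hk).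
Let a1 : 'I_k := Ordinal (leq_trans (isT : (2 <= 3)%N) hk).
Let a2 : 'I_k := Ordinal hk.
Let S : {set 'I_n} := f @: [set~ a0].

Definition Pc (c : nat) (i : 'I_n) : bool :=
  match c with 0 => true | 1 => i == f a0 | 2 => i \in S | 3 => i == f a1
  | _ => i == f a2 end.
Definition Qr (r : nat) (i : 'I_n) : bool :=
  match r with 0 => true | 1 => i \in S | 2 => i == f a0 | 3 => i == f a2
  | _ => i == f a1 end.
Definition wc (r : nat) : {poly int} := match r with 0 => -1 | _ => 2 end.

Definition Um : 'M[{poly int}]_(n, 5) := \matrix_(i, c) (Pc c i)%:R.
Definition Wm : 'M[{poly int}]_(5, n) := \matrix_(r, i) (wc r * (Qr r i)%:R).

Lemma eqf a b : (f a == f b) = (val a == val b).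
Proof. by rewrite (inj_eq hf). Qed.

Lemma inS a : (f a \in S) = (val a != 0%N).
Proof. by rewrite /S mem_imset // !inE. Qed.

Lemma negf a b : neg_edge f (f a) (f b) = U1_edge a b.
Proof.
apply/existsP/idP => [[a' /existsP [b' /and3P [/eqP/hf-> /eqP/hf-> //]]]|H].
by exists a; apply/existsP; exists b; rewrite !eqxx.
Qed.

Lemma neg_nl i j : (forall a, f a != i) -> neg_edge f i j = false.
Proof.
move=> Hi; apply/existsP => [[a /existsP [b /and3P [Ha _ _]]]].
by move: (Hi a); rewrite Ha.
Qed.

Lemma neg_nr i j : (forall a, f a != j) -> neg_edge f i j = false.
Proof.
move=> Hj; apply/existsP => [[a /existsP [b /and3P [_ Hb _]]]].
by move: (Hj b); rewrite Hb.
Qed.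

Lemma nS i : (forall a, f a != i) -> (i \in S) = false.
Proof. by move=> Hi; apply/imsetP => [[a _ /esym/eqP]]; rewrite (negbTE (Hi a)). Qed.

Lemma range i : (exists a, i = f a) \/ (forall a, f a != i).
Proof.
case: (pickP (fun a => f a == i)) => [a /eqP <-|H]; first by left; exists a.
by right=> a; rewrite H.
Qed.

Lemma step1 : char_poly (signed_complete_adj (neg_edge f)) =
  \det (('X + 1)%:M + Um *m Wm).
Proof.
congr (\det _); apply/matrixP => i j.
rewrite !mxE !big_ord_recl big_ord0 !mxE /=.
have nsf x (Hx : forall a, f a != x) a : (x == f a) = false.
  by rewrite eq_sym (negbTE (Hx a)).
case: (range i) => [[a ->]|Hi]; case: (range j) => [[b ->]|Hj].
- rewrite negf !eqf !inS /U1_edge.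
  have -> : (a == b) = (val a == val b) by [].
  rewrite /=; move: (nat_of_ord a) (nat_of_ord b) => x y.
  case: x => [|[|[|x]]]; case: y => [|[|[|y]]] /=; rewrite ?polyCN ?polyC1 ?polyC0; try ring.
  by case: (x.+3 == y.+3) => /=; rewrite ?polyCN ?polyC1 ?polyC0; ring.
- rewrite neg_nr // (nS Hj) !(nsf j Hj) (eq_sym (f a) j) (nsf j Hj) /=.
  rewrite ?polyCN ?polyC1 ?polyC0; ring.
- rewrite neg_nl // (nS Hi) !(nsf i Hi) /=.
  rewrite ?polyCN ?polyC1 ?polyC0; ring.
- rewrite neg_nl // (nS Hi) (nS Hj) !(nsf i Hi) !(nsf j Hj).
  by case: (i == j) => /=; rewrite ?polyCN ?polyC1 ?polyC0; ring.
Qed.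


Lemma card_eqL (P : pred 'I_n) x : #|[pred i | (i == x) && P i]| = P x.
Proof.
case Px: (P x).
  rewrite /= -(card1 x); apply: eq_card => i; rewrite !inE.
  by case: eqP => // ->; rewrite Px.
by apply: eq_card0 => i; rewrite !inE; case: eqP => // ->; rewrite Px.
Qed.

Lemma card_eqR (P : pred 'I_n) x : #|[pred i | P i && (i == x)]| = P x.
Proof. by rewrite -card_eqL; apply: eq_card => i; rewrite !inE andbC. Qed.

Lemma card_eqT x : #|[pred i : 'I_n | (i == x) && true]| = 1%N.
Proof. by rewrite (card_eqL (fun _ => true)). Qed.

Lemma card_eq1 x : #|[pred i : 'I_n | i == x]| = 1%N.
Proof. by rewrite -(card1 x); apply: eq_card. Qed.

Lemma cardS : #|S| = k.-1.
Proof. by rewrite /S card_imset // cardsC1 card_ord. Qed.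

Lemma card_TT : #|[pred i : 'I_n | true && true]| = n.
Proof. by rewrite -[RHS]card_ord; apply: eq_card. Qed.
Lemma card_TS : #|[pred i : 'I_n | true && (i \in S)]| = k.-1.
Proof. by rewrite -cardS; apply: eq_card. Qed.
Lemma card_ST : #|[pred i : 'I_n | (i \in S) && true]| = k.-1.
Proof. by rewrite -cardS; apply: eq_card => i; rewrite !inE andbT. Qed.
Lemma card_SS : #|[pred i : 'I_n | (i \in S) && (i \in S)]| = k.-1.
Proof. by rewrite -cardS; apply: eq_card => i; rewrite !inE andbb. Qed.

Lemma WU r c : (Wm *m Um) r c = wc r * #|[pred i | Qr r i && Pc c i]|%:R.
Proof.
rewrite !mxE; under eq_bigr => i _ do rewrite !mxE -mulrA -natrM mulnb.
rewrite -mulr_sumr -natr_sum -sum1_card; congr (_ * _%:R).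
rewrite [RHS]big_mkcond /=; apply: eq_bigr => i _; rewrite !inE.
by case: (_ && _).
Qed.

Definition gm (y N K : {poly int}) (i j : nat) : {poly int} :=
  y * (i == j)%:R + match i, j with
   | 0, 0 => - N | 0, 1 => -1 | 0, 2 => -(K-1) | 0, _ => -1
   | 1, 0 => 2*(K-1) | 1, 1 => 0 | 1, 2 => 2 * (K-1) | 1, _ => 2
   | 2, 0 => 2 | 2, 1 => 2 | 2, _ => 0
   | 3, 0 => 2 | 3, 2 => 2 | 3, 4 => 2 | 3, _ => 0
   | _, 0 => 2 | _, 2 => 2 | _, 3 => 2 | _, _ => 0 end.

Lemma step4 (y : {poly int}) :
  \det (y%:M + Wm *m Um) = detf 5 (gm y n%:R k%:R).
Proof.
have KE : (k.-1)%:R = k%:R - 1 :> {poly int}.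
  by rewrite -subn1 natrB // (leq_trans _ hk).
congr (\det _); apply/matrixP => r c; rewrite [LHS]mxE WU !mxE.
case: r c => [[|[|[|[|[|r]]]]] Hr] [[|[|[|[|[|c]]]]] Hc] //=.
all: rewrite ?card_TT ?card_TS ?card_ST ?card_SS ?card_eqT ?card_eqL ?card_eqR /=.
all: rewrite ?inS ?eqf /= ?KE.
all: rewrite ?card_eq1 /gm /=; ring.
Qed.

End Main.

Lemma det5gm (y N K : {poly int}) : detf 5 (gm y N K) =
  (y - 2) * ((y-1)^+4 + (6 - N) * (y-1)^+3 + (16 - 5 * N) * (y-1)^+2
     + (4 * K - 11 * N + 4 * K * (N - K) + 18) * (y-1)
     + (28 * K - 31 * N + 12 * K * (N - K) + 7)).
Proof. rewrite detf_dl /gm /=; ring. Qed.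

Unset Implicit Arguments.
Theorem lemma3p5 (n k : nat) (hk : (3 <= k)%N) (hkn : (k <= n)%N)
    (f : 'I_k -> 'I_n) (hf : injective f) :
  let u : int := n%:Z - k%:Z in
  ('X + 1) ^+ 5 * char_poly (signed_complete_adj (neg_edge f)) =
  ('X + 1) ^+ n * ('X - 1) *
    ('X ^+ 4 + (6 - n%:Z)%:P * 'X ^+ 3 + (16 - 5 * n%:Z)%:P * 'X ^+ 2
     + (4 * k%:Z - 11 * n%:Z + 4 * k%:Z * u + 18)%:P * 'X
     + (28 * k%:Z - 31 * n%:Z + 12 * k%:Z * u + 7)%:P).
Proof.
move=> u.
rewrite (step1 hk hf) sylv (step4 hk hf).
apply: (etrans (congr1 (fun p => ('X+1)^+n * p) (det5gm _ _ _))).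
rewrite /u -!natz !(rmorph_nat, rmorphB, rmorphD, rmorphM).
rewrite -[RHS]mulrA; congr (_ * _).
move: (n%:R : {poly int}) (k%:R : {poly int}) ('X : {poly int}) => N K X.
ring.
Qed.
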